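(* Let $r,\beta_0,a,\mu>0$ with $\beta_0<1$, and consider the family of systems $$\dot S = S(A-S)-\beta_0 IS,\qquad \dot I=\beta_0 IS-\mu I-\frac{rI}{a+I}$$ with bifurcation parameter $A>0$ (equivalently $\mathcal{R}_0=\beta_0A/(\mu+r/a)$). At the parameter value where $\mathcal{R}_0=\phi_0:=1-\dfrac{(a\beta_0-\sqrt r)^2}{a\mu+r}$, the system undergoes a saddle-node bifurcation (of endemic equilibria).
   Context: $\mu$ denotes the total death rate of infectious individuals. Endemic equilibria are zeros of the vector field with $I\ne0$. A saddle-node bifurcation is the generic codimension-one bifurcation in which two equilibria (here a sink and a saddle) coalesce into a single equilibrium with a zero eigenvalue and disappear as the parameter crosses the critical value. *)

(* Defs.v *)
From Stdlib Require Import Reals.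
From Coquelicot Require Import Coquelicot.
Open Scope R_scope.

(* A planar vector field depending on a real parameter p:
     x' = F1 p x y,   y' = F2 p x y. *)

Definition is_equilibrium (F1 F2 : R -> R -> R -> R) (p x y : R) : Prop :=
  F1 p x y = 0 /\ F2 p x y = 0.

Definition jac11 (F1 : R -> R -> R -> R) p x y := Derive (fun u => F1 p u y) x.
Definition jac12 (F1 : R -> R -> R -> R) p x y := Derive (fun v => F1 p x v) y.
Definition jac21 (F2 : R -> R -> R -> R) p x y := Derive (fun u => F2 p u y) x.
Definition jac22 (F2 : R -> R -> R -> R) p x y := Derive (fun v => F2 p x v) y.

Definition is_eigenvalue (F1 F2 : R -> R -> R -> R) (p x y : R) (lam : C) : Prop :=
  ((RtoC (jac11 F1 p x y) - lam) * (RtoC (jac22 F2 p x y) - lam)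
   - RtoC (jac12 F1 p x y) * RtoC (jac21 F2 p x y))%C = 0%C.

Definition is_sink F1 F2 p x y : Prop :=
  forall lam : C, is_eigenvalue F1 F2 p x y lam -> Re lam < 0.

Definition is_saddle F1 F2 p x y : Prop :=
  exists l1 l2 : R, is_eigenvalue F1 F2 p x y (RtoC l1) /\
                    is_eigenvalue F1 F2 p x y (RtoC l2) /\ l1 < 0 < l2.

Definition near_pt (d x0 y0 x y : R) : Prop := Rabs (x - x0) < d /\ Rabs (y - y0) < d.

(* Saddle-node bifurcation at parameter value p0 of the equilibria satisfying the
   admissibility predicate E (here: endemic, I <> 0):
   - at p0 there is an admissible equilibrium (x0,y0) having eigenvalue 0, and it is
     the only admissible equilibrium in a neighbourhood U of (x0,y0);
   - on one side of p0 (sgn = +1 or -1 fixes which side) there is no admissible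
     equilibrium in U;
   - on the other side there are exactly two admissible equilibria in U, a sink and
     a saddle, and they coalesce into (x0,y0) as p -> p0. *)
Definition saddle_node_bifurcation (F1 F2 : R -> R -> R -> R)
    (E : R -> R -> Prop) (p0 : R) : Prop :=
  exists x0 y0 : R,
    E x0 y0 /\ is_equilibrium F1 F2 p0 x0 y0 /\ is_eigenvalue F1 F2 p0 x0 y0 (RtoC 0) /\
    exists d eps sgn : R, 0 < d /\ 0 < eps /\ (sgn = 1 \/ sgn = -1) /\
      (forall x y, near_pt d x0 y0 x y -> E x y -> is_equilibrium F1 F2 p0 x y ->
          x = x0 /\ y = y0) /\
      (forall p, 0 < sgn * (p - p0) < eps ->
         forall x y, near_pt d x0 y0 x y -> E x y -> ~ is_equilibrium F1 F2 p x y) /\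
      (forall p, 0 < sgn * (p0 - p) < eps ->
         exists x1 y1 x2 y2,
           near_pt d x0 y0 x1 y1 /\ E x1 y1 /\ is_equilibrium F1 F2 p x1 y1 /\
             is_sink F1 F2 p x1 y1 /\
           near_pt d x0 y0 x2 y2 /\ E x2 y2 /\ is_equilibrium F1 F2 p x2 y2 /\
             is_saddle F1 F2 p x2 y2 /\
           (forall x y, near_pt d x0 y0 x y -> E x y -> is_equilibrium F1 F2 p x y ->
              (x = x1 /\ y = y1) \/ (x = x2 /\ y = y2))) /\
      (forall eta, 0 < eta -> exists eps', 0 < eps' /\
         forall p, 0 < sgn * (p0 - p) < eps' ->
           forall x y, near_pt d x0 y0 x y -> E x y -> is_equilibrium F1 F2 p x y ->
             near_pt eta x0 y0 x y).

Definition SI_S (beta0 : R) (A S I : R) : R := S * (A - S) - beta0 * I * S.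
Definition SI_I (beta0 mu r a : R) (A S I : R) : R :=
  beta0 * I * S - mu * I - r * I / (a + I).

Definition endemic (S I : R) : Prop := I <> 0.

Definition basic_R0 (beta0 mu r a A : R) : R := beta0 * A / (mu + r / a).
Definition phi0 (beta0 mu r a : R) : R :=
  1 - (a * beta0 - sqrt r) ^ 2 / (a * mu + r).

(* Main.v *)
Require Import Defs.
From Stdlib Require Import Reals Lra Psatz.
From Coquelicot Require Import Coquelicot.
Open Scope R_scope.

Lemma ceq (j11 j12 j21 j22 x y : R) :
  ((RtoC j11 - (x,y)) * (RtoC j22 - (x,y)) - RtoC j12 * RtoC j21)%C = 0%C ->
  (j11 - x) * (j22 - x) - y*y - j12*j21 = 0 /\ y * (j11 + j22 - 2*x) = 0.
Proof.
  intro H. pose proof (f_equal fst H) as H1. pose proof (f_equal snd H) as H2.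
  cbn in H1, H2. split; lra.
Qed.

Lemma ceq_real (j11 j12 j21 j22 l : R) :
  (j11 - l) * (j22 - l) - j12*j21 = 0 ->
  ((RtoC j11 - RtoC l) * (RtoC j22 - RtoC l) - RtoC j12 * RtoC j21)%C = 0%C.
Proof.
  intro H. apply injective_projections; cbn; lra.
Qed.

Lemma sink_crit (j11 j12 j21 j22 : R) (lam : C) :
  j11 + j22 < 0 -> 0 < j11*j22 - j12*j21 ->
  ((RtoC j11 - lam) * (RtoC j22 - lam) - RtoC j12 * RtoC j21)%C = 0%C -> Re lam < 0.
Proof.
  intros hT hD H. destruct lam as [x y]. apply ceq in H as [H1 H2]. unfold Re; simpl.
  destruct (Req_dec y 0) as [hy|hy].
  - subst y. destruct (Rlt_or_le x 0) as [h|h]; [exact h|]. exfalso. nra.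
  - assert (j11 + j22 - 2*x = 0).
    { apply (Rmult_eq_reg_l y); [lra|auto]. } lra.
Qed.

Lemma saddle_crit (j11 j12 j21 j22 : R) :
  j11*j22 - j12*j21 < 0 ->
  exists l1 l2 : R,
    ((RtoC j11 - RtoC l1) * (RtoC j22 - RtoC l1) - RtoC j12 * RtoC j21)%C = 0%C /\
    ((RtoC j11 - RtoC l2) * (RtoC j22 - RtoC l2) - RtoC j12 * RtoC j21)%C = 0%C /\
    l1 < 0 < l2.
Proof.
  intro hD.
  assert (hpos : 0 <= (j11+j22)*(j11+j22) - 4*(j11*j22 - j12*j21)) by (pose proof (Rle_0_sqr (j11+j22)); unfold Rsqr in *; lra).
  pose proof (sqrt_sqrt _ hpos) as hs. pose proof (sqrt_pos ((j11+j22)*(j11+j22) - 4*(j11*j22 - j12*j21))) as hs0.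
  revert hs hs0. generalize (sqrt ((j11+j22)*(j11+j22) - 4*(j11*j22 - j12*j21))). intros s hs hs0.
  assert (hsT : j11 + j22 < s /\ - (j11+j22) < s) by (split; nra).
  exists ((j11 + j22 - s)/2), ((j11 + j22 + s)/2). repeat split.
  - apply ceq_real. nra.
  - apply ceq_real. nra.
  - lra.
  - lra.
Qed.

Lemma jac11_SI b A S I : jac11 (SI_S b) A S I = A - 2*S - b*I.
Proof. unfold jac11, SI_S. apply is_derive_unique. auto_derive; auto. ring. Qed.
Lemma jac12_SI b A S I : jac12 (SI_S b) A S I = - b*S.
Proof. unfold jac12, SI_S. apply is_derive_unique. auto_derive; auto. ring. Qed.
Lemma jac21_SI b mu r a A S I : jac21 (SI_I b mu r a) A S I = b*I.
Proof. unfold jac21, SI_I. apply is_derive_unique. auto_derive; auto. ring. Qed.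
Lemma jac22_SI b mu r a A S I : a + I <> 0 ->
  jac22 (SI_I b mu r a) A S I = b*S - mu - r*a/((a+I)*(a+I)).
Proof.
  intro h. unfold jac22, SI_I. apply is_derive_unique. auto_derive. auto. field. auto.
Qed.

Lemma eq_iff b mu r a A S I : S <> 0 -> I <> 0 -> a + I <> 0 ->
  (is_equilibrium (SI_S b) (SI_I b mu r a) A S I <->
   S = A - b*I /\ b*S - mu - r/(a+I) = 0).
Proof.
  intros hS hI hu. unfold is_equilibrium, SI_S, SI_I.
  replace (S * (A - S) - b * I * S) with (S * (A - b*I - S)) by ring.
  replace (b * I * S - mu * I - r * I / (a + I)) with (I * (b*S - mu - r/(a+I))) by (field; auto).
  split.
  - intros [h1 h2]. split.
    + apply Rmult_integral in h1 as [h|h]; [contradiction|lra].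
    + apply Rmult_integral in h2 as [h|h]; [contradiction|lra].
  - intros [h1 h2]. rewrite h2. split; [|ring]. rewrite h1. ring.
Qed.

Lemma classify b mu r a A S I (hb: 0<b) (hb1: b<1) (hr: 0<r) (hmu: 0<mu) (ha: 0<a)
  (hS: 0<S) (hu: 0 < a+I) (e1: S = A - b*I) (e2: b*S - mu - r/(a+I) = 0) :
  (0 < I*(b*b*(a+I)*(a+I) - r) -> is_sink (SI_S b) (SI_I b mu r a) A S I) /\
  (I*(b*b*(a+I)*(a+I) - r) < 0 -> is_saddle (SI_S b) (SI_I b mu r a) A S I).
Proof.
  assert (hu0 : a + I <> 0) by lra.
  unfold is_sink, is_saddle, is_eigenvalue.
  rewrite jac11_SI, jac12_SI, jac21_SI, jac22_SI by auto.
  revert e2 hu hu0. set (u := a + I). intros e2 hu hu0.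
  set (k := / u).
  assert (hk : u * k = 1) by (unfold k; field; auto).
  assert (hk0 : 0 < k) by (unfold k; apply Rinv_0_lt_compat; auto).
  assert (e3 : b*S - mu = r*k) by (unfold k; unfold Rdiv in e2; lra).
  assert (hI : I = u - a) by (unfold u; ring).
  assert (e4 : b * S - mu - r * a / (u * u) = r*k*k*I).
  { rewrite e3. unfold Rdiv. replace (/ (u*u)) with (k*k) by (unfold k; field; auto).
    rewrite hI. replace (r*k*k*(u-a)) with (r*k*(u*k) - r*a*k*k) by ring. rewrite hk. ring. }
  rewrite e4.
  replace (A - 2*S - b*I) with (-S) by lra.
  assert (hT : -S + r*k*k*I < 0).
  { assert (b*(-S + r*k*k*I) = -mu - r*k*(1-b) - b*r*a*k*k).
    { replace (b*(-S + r*k*k*I)) with (-(b*S - mu) - mu + b*r*k*k*(u-a)) by (rewrite hI; ring).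
      rewrite e3. replace (b*r*k*k*(u-a)) with (b*r*k*(u*k) - b*r*a*k*k) by ring. rewrite hk. ring. }
    assert (0 < r*k*(1-b)) by (apply Rmult_lt_0_compat; [apply Rmult_lt_0_compat|]; lra).
    assert (0 < b*r*a*k*k) by (repeat apply Rmult_lt_0_compat; lra).
    nra. }
  assert (hD : (-S) * (r*k*k*I) - (-b*S)*(b*I) = S*k*k*(I*(b*b*u*u - r))).
  { replace (S*k*k*(I*(b*b*u*u - r))) with (S*I*b*b*(u*k)*(u*k) - S*k*k*I*r) by ring.
    rewrite hk. ring. }
  assert (hSk : 0 < S*k*k) by (repeat apply Rmult_lt_0_compat; lra).
  split.
  - intros hpos lam. apply sink_crit. lra. rewrite hD. apply Rmult_lt_0_compat; auto.
  - intros hneg. apply saddle_crit. rewrite hD.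
    assert (0 < S*k*k*(-(I*(b*b*u*u - r)))) by (apply Rmult_lt_0_compat; lra). nra.
Qed.

Lemma key (r b a mu q Astar Ss Is d p x y : R)
  (hr : 0 < r) (hb : 0 < b) (ha : 0 < a) (hmu : 0 < mu) (hq : q*q = r) (hq0 : 0 < q)
  (hAs : b*Astar = mu - a*b*b + 2*b*q) (hIs : Is = q/b - a) (hSs : Ss = Astar - b*Is)
  (hd1 : d <= Ss) (hd2 : d <= q/b) :
  near_pt d Ss Is x y -> endemic x y -> is_equilibrium (SI_S b) (SI_I b mu r a) p x y ->
  0 < x /\ 0 < a + y /\ x = p - b*y /\ b*x - mu - r/(a+y) = 0 /\
  (b*(a+y) - q)*(b*(a+y) - q) = (p - Astar)*((b*(a+y) - q) + q).
Proof.
  intros [n1 n2] hE heq. unfold endemic in hE.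
  apply Rabs_def2 in n1 as [n1 n1']. apply Rabs_def2 in n2 as [n2 n2'].
  assert (hx : 0 < x) by lra.
  assert (hu : 0 < a + y) by (rewrite hIs in *; lra).
  apply eq_iff in heq as [e1 e2]; try lra.
  assert (E : (b*x - mu)*(a+y) = r).
  { replace (b*x - mu) with (r/(a+y)) by lra. field. lra. }
  repeat split; try lra.
  assert (b*Astar*(a+y) = (mu - a*b*b + 2*b*q)*(a+y)) by (rewrite hAs; ring).
  rewrite e1 in E. nra.
Qed.

Lemma sq_lt (w m : R) : 0 <= m -> w*w < m*m -> -m < w < m.
Proof. intros. split; nra. Qed.

Lemma build (r b a mu q Astar p w : R)
  (hb : 0 < b) (hq : q*q = r) (hAs : b*Astar = mu - a*b*b + 2*b*q)
  (hw : w*w = (p - Astar)*(w+q)) (hqw : 0 < q + w) :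
  b*(p - b*((q+w)/b - a)) - mu - r/(a + ((q+w)/b - a)) = 0.
Proof.
  replace (a + ((q+w)/b - a)) with ((q+w)/b) by ring.
  replace (r/((q+w)/b)) with (b*r/(q+w)) by (field; lra).
  replace (b*(p - b*((q+w)/b - a))) with (b*p - b*(q+w) + a*b*b) by (field; lra).
  rewrite <- hq.
  apply (Rmult_eq_reg_r (q+w)); [|lra].
  replace ((b * p - b * (q + w) + a * b * b - mu - b * (q * q) / (q + w)) * (q + w))
    with ((b * p - b * (q + w) + a * b * b - mu)*(q+w) - b*(q*q)) by (field; lra).
  assert (b*p = b*(p - Astar) + b*Astar) by ring.
  nra.
Qed.

Theorem lemma5p3 (r beta0 a mu : R)
  (hr : 0 < r) (hb : 0 < beta0) (ha : 0 < a) (hmu : 0 < mu) (hb1 : beta0 < 1)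
  (hnd : a * beta0 <> sqrt r) (Astar : R)
  (hA : basic_R0 beta0 mu r a Astar = phi0 beta0 mu r a) :
  saddle_node_bifurcation (SI_S beta0) (SI_I beta0 mu r a) endemic Astar.
Proof.
  assert (hq : sqrt r * sqrt r = r) by (apply sqrt_sqrt; lra).
  assert (hq0 : 0 < sqrt r) by (apply sqrt_lt_R0; lra).
  assert (hAs : beta0*Astar = mu - a*beta0*beta0 + 2*beta0*sqrt r).
  { assert (H: beta0*Astar*a = (a*mu+r) - (a*beta0-sqrt r)^2).
    { replace (beta0*Astar*a) with (basic_R0 beta0 mu r a Astar * (a*mu+r))
        by (unfold basic_R0; field; split; nra).
      rewrite hA. unfold phi0. field. nra. }
    apply (Rmult_eq_reg_r a); [|lra]. rewrite H. rewrite <- hq at 1. ring. }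
  revert hnd hq hq0 hAs. generalize (sqrt r). intros q hnd hq hq0 hAs. clear hA.
  set (Is := q/beta0 - a). set (Ss := Astar - beta0*Is).
  assert (hqb : beta0 * (q/beta0) = q) by (field; lra).
  assert (hIsb : beta0*Is = q - a*beta0) by (unfold Is; rewrite Rmult_minus_distr_l, hqb; ring).
  assert (hSs' : beta0*Ss = mu + beta0*q) by (unfold Ss; nra).
  assert (hSpos : 0 < Ss) by nra.
  assert (hIs0 : Is <> 0) by (intro h; rewrite h in hIsb; apply hnd; lra).
  assert (hqb0 : 0 < q/beta0) by (apply Rdiv_lt_0_compat; lra).
  assert (haIs : a + Is = q/beta0) by (unfold Is; ring).
  set (d := Rmin Ss (Rmin (q/beta0) (Rabs Is))).
  assert (hd0 : 0 < d).
  { apply Rmin_pos; [lra| apply Rmin_pos; [lra| apply Rabs_pos_lt; auto]]. }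
  assert (hd1 : d <= Ss) by apply Rmin_l.
  assert (hd2 : d <= q/beta0) by (eapply Rle_trans; [apply Rmin_r|apply Rmin_l]).
  assert (hd3 : d <= Rabs Is) by (eapply Rle_trans; [apply Rmin_r|apply Rmin_r]).
  set (m := beta0*d/2).
  assert (hm0 : 0 < m) by (unfold m; nra).
  assert (hmq : m <= q/2) by (unfold m; nra).
  assert (hmd : m < d) by (unfold m; nra).
  set (eps := Rmin m (Rmin 1 (m*m/(2*(1+4*q))))).
  assert (he0 : 0 < eps).
  { apply Rmin_pos; [lra| apply Rmin_pos; [lra| apply Rdiv_lt_0_compat; nra]]. }
  assert (he1 : eps <= m) by apply Rmin_l.
  assert (he2 : eps <= 1) by (eapply Rle_trans; [apply Rmin_r|apply Rmin_l]).
  assert (he3 : eps <= m*m/(2*(1+4*q))) by (eapply Rle_trans; [apply Rmin_r|apply Rmin_r]).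
  assert (he3' : eps * (2*(1+4*q)) <= m*m).
  { replace (m*m) with (m*m/(2*(1+4*q)) * (2*(1+4*q))) by (field; lra).
    apply Rmult_le_compat_r; lra. }
  assert (BUILD : forall p w, 0 <= p - Astar < m -> w*w = (p - Astar)*(w+q) -> -m < w < m ->
     near_pt d Ss Is (p - beta0*((q+w)/beta0 - a)) ((q+w)/beta0 - a) /\
     endemic (p - beta0*((q+w)/beta0 - a)) ((q+w)/beta0 - a) /\
     is_equilibrium (SI_S beta0) (SI_I beta0 mu r a) p (p - beta0*((q+w)/beta0 - a)) ((q+w)/beta0 - a) /\
     0 < Is * ((q+w)/beta0 - a) /\
     (0 < ((q+w)/beta0 - a) * w -> is_sink (SI_S beta0) (SI_I beta0 mu r a) p (p - beta0*((q+w)/beta0 - a)) ((q+w)/beta0 - a)) /\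
     (((q+w)/beta0 - a) * w < 0 -> is_saddle (SI_S beta0) (SI_I beta0 mu r a) p (p - beta0*((q+w)/beta0 - a)) ((q+w)/beta0 - a))).
  { intros p w htm hw [hw1 hw2].
    set (y := (q+w)/beta0 - a). set (x := p - beta0*y).
    assert (hyI : y - Is = w/beta0) by (unfold y, Is; field; lra).
    assert (hwb : -d/2 < w/beta0 < d/2).
    { split; [apply (Rmult_lt_reg_l beta0)|apply (Rmult_lt_reg_l beta0)]; try lra;
      replace (beta0*(w/beta0)) with w by (field; lra); unfold m in *; lra. }
    assert (hxS : x - Ss = (p - Astar) - w).
    { unfold x, Ss. replace (beta0*y) with (beta0*(y - Is) + beta0*Is) by ring.
      rewrite hyI. replace (beta0*(w/beta0)) with w by (field; lra). ring. }
    assert (hn : near_pt d Ss Is x y).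
    { split; apply Rabs_def1; unfold m in *; nra. }
    assert (hsg : 0 < Is * y).
    { destruct (Rlt_or_le 0 Is) as [h|h].
      - rewrite Rabs_right in hd3 by lra. nra.
      - rewrite Rabs_left1 in hd3 by lra. assert (Is <> 0) by auto. nra. }
    assert (hy0 : y <> 0) by (intro h; rewrite h in hsg; lra).
    assert (hx0 : 0 < x) by nra.
    assert (hu : a + y = (q+w)/beta0) by (unfold y; ring).
    assert (hu0 : 0 < a + y) by (rewrite hu; apply Rdiv_lt_0_compat; lra).
    assert (e2 : beta0*x - mu - r/(a+y) = 0) by (unfold x, y; apply (build r beta0 a mu q Astar p w); auto; lra).
    assert (e1 : x = p - beta0*y) by reflexivity.
    assert (hbu : beta0*(a+y) = q + w) by (rewrite hu; field; lra).
    assert (hdet : y*(beta0*beta0*(a+y)*(a+y) - r) = (y*w)*(2*q+w)).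
    { replace (beta0*beta0*(a+y)*(a+y)) with ((beta0*(a+y))*(beta0*(a+y))) by ring.
      rewrite hbu, <- hq. ring. }
    destruct (classify beta0 mu r a p x y) as [C1 C2]; auto.
    split; [exact hn|]. split; [exact hy0|]. split; [apply eq_iff; auto; lra|].
    split; [exact hsg|]. split.
    - intro h. apply C1. rewrite hdet. apply Rmult_lt_0_compat; lra.
    - intro h. apply C2. rewrite hdet. assert (0 < (- (y*w))*(2*q+w)) by (apply Rmult_lt_0_compat; lra). lra. }
  assert (KEY := fun p x y => key r beta0 a mu q Astar Ss Is d p x y hr hb ha hmu hq hq0 hAs
                  eq_refl eq_refl hd1 hd2).
  assert (hwI : forall y, (beta0*(a+y) - q)/beta0 = y - Is).
  { intro y. unfold Is. field. lra. }
  exists Ss, Is. split; [exact hIs0|]. split.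
  { apply eq_iff; auto; try lra. split; [reflexivity|].
    rewrite haIs. replace (r/(q/beta0)) with (beta0*q) by (rewrite <- hq; field; lra). lra. }
  split.
  { unfold is_eigenvalue. rewrite jac11_SI, jac12_SI, jac21_SI, jac22_SI by lra.
    apply ceq_real. rewrite haIs.
    replace (r*a/((q/beta0)*(q/beta0))) with (a*beta0*beta0) by (rewrite <- hq; field; lra).
    replace (Astar - 2*Ss - beta0*Is - 0) with (-Ss) by (unfold Ss; ring).
    replace ((-Ss) * (beta0*Ss - mu - a*beta0*beta0 - 0) - (-beta0*Ss)*(beta0*Is))
      with (-Ss * (beta0*Ss - mu - a*beta0*beta0 - beta0*(beta0*Is))) by ring.
    rewrite hIsb. replace (beta0 * Ss - mu - a * beta0 * beta0 - beta0 * (q - a * beta0)) with 0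
      by (rewrite hSs'; ring). ring. }
  exists d, eps, (-1). split; [lra|]. split; [lra|]. split; [right; reflexivity|].
  split.
  { intros x y hn hE heq. destruct (KEY Astar x y hn hE heq) as [hx [hu [e1 [e2 hw]]]].
    replace (Astar - Astar) with 0 in hw by ring.
    assert (hw0 : beta0*(a+y) - q = 0) by nra.
    assert (y - Is = 0) by (rewrite <- (hwI y), hw0; field; lra).
    assert (y = Is) by lra.
    split; [|auto]. rewrite e1. subst y. reflexivity. }
  split.
  { intros p hp x y hn hE heq. destruct (KEY p x y hn hE heq) as [hx [hu [e1 [e2 hw]]]].
    replace (beta0*(a+y) - q + q) with (beta0*(a+y)) in hw by ring.
    assert (0 < beta0*(a+y)) by nra. assert (p - Astar < 0) by lra.
    assert (0 < (Astar - p)*(beta0*(a+y))) by (apply Rmult_lt_0_compat; lra).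
    pose proof (Rle_0_sqr (beta0*(a+y)-q)). unfold Rsqr in *. lra. }
  split.
  { intros p hp.
    set (t := p - Astar).
    assert (ht : 0 < t < eps) by (unfold t; lra).
    assert (hpos : 0 <= t*t + 4*t*q) by nra.
    pose proof (sqrt_sqrt _ hpos) as hs. pose proof (sqrt_pos (t*t + 4*t*q)) as hs0.
    revert hs hs0. generalize (sqrt (t*t + 4*t*q)). intros s hs hs0.
    assert (hst : t < s) by nra.
    assert (hsm2 : s*s < m*m).
    { rewrite hs. assert (t*(2*(1+4*q)) < m*m) by nra. nra. }
    assert (hsm : s < m) by nra.
    set (w1 := (t+s)/2). set (w2 := (t-s)/2).
    assert (hw1 : w1*w1 = (p - Astar)*(w1+q)) by (unfold w1; fold t; nra).
    assert (hw2 : w2*w2 = (p - Astar)*(w2+q)) by (unfold w2; fold t; nra).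
    assert (hw1b : -m < w1 < m) by (unfold w1; lra).
    assert (hw2b : -m < w2 < m) by (unfold w2; lra).
    assert (htm : 0 <= p - Astar < m) by (fold t; lra).
    destruct (BUILD p w1 htm hw1 hw1b) as [n1 [E1 [Q1 [S1 [K1 L1]]]]].
    destruct (BUILD p w2 htm hw2 hw2b) as [n2 [E2 [Q2 [S2 [K2 L2]]]]].
    assert (hw1p : 0 < w1) by (unfold w1; lra).
    assert (hw2n : w2 < 0) by (unfold w2; lra).
    assert (UNIQ : forall x y, near_pt d Ss Is x y -> endemic x y ->
        is_equilibrium (SI_S beta0) (SI_I beta0 mu r a) p x y ->
        (x = p - beta0*((q+w1)/beta0 - a) /\ y = (q+w1)/beta0 - a) \/
        (x = p - beta0*((q+w2)/beta0 - a) /\ y = (q+w2)/beta0 - a)).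
    { intros x y hn hE heq. destruct (KEY p x y hn hE heq) as [hx [hu [e1 [e2 hw]]]].
      revert hw. set (w := beta0*(a+y) - q). intro hw.
      assert (hy : y = (q+w)/beta0 - a) by (unfold w; field; lra).
      assert (hprod : (w - w1)*(w - w2) = 0).
      { unfold w1, w2. fold t in hw. nra. }
      apply Rmult_integral in hprod as [h|h].
      - left. assert (w = w1) by lra. rewrite <- H. split; [rewrite e1, <- hy|]; auto.
      - right. assert (w = w2) by lra. rewrite <- H. split; [rewrite e1, <- hy|]; auto. }
    destruct (Rlt_or_le 0 Is) as [hIp|hIn].
    - assert (0 < (q + w1) / beta0 - a) by nra.
      assert ((q + w2) / beta0 - a > 0) by nra.
      exists (p - beta0*((q+w1)/beta0 - a)), ((q+w1)/beta0 - a),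
             (p - beta0*((q+w2)/beta0 - a)), ((q+w2)/beta0 - a).
      repeat (split; [solve [auto; apply K1; nra | auto; apply L2; nra]|]). exact UNIQ.
    - assert (Is < 0) by lra.
      assert ((q + w1) / beta0 - a < 0) by nra.
      assert ((q + w2) / beta0 - a < 0) by nra.
      exists (p - beta0*((q+w2)/beta0 - a)), ((q+w2)/beta0 - a),
             (p - beta0*((q+w1)/beta0 - a)), ((q+w1)/beta0 - a).
      repeat (split; [solve [auto; apply K2; nra | auto; apply L1; nra]|]).
      intros x y hn hE heq. destruct (UNIQ x y hn hE heq); tauto. }
  { intros eta heta.
    set (eps' := Rmin (eta/2) ((beta0*eta/2)*(beta0*eta/2)/(2*q))).
    assert (he'0 : 0 < eps').
    { assert (0 < beta0*eta/2) by nra.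
      apply Rmin_pos; [lra| apply Rdiv_lt_0_compat; [apply Rmult_lt_0_compat|]; lra]. }
    assert (he'1 : eps' <= eta/2) by apply Rmin_l.
    assert (he'2 : eps' * (2*q) <= (beta0*eta/2)*(beta0*eta/2)).
    { replace ((beta0*eta/2)*(beta0*eta/2)) with ((beta0*eta/2)*(beta0*eta/2)/(2*q) * (2*q)) by (field; lra).
      apply Rmult_le_compat_r; [lra|apply Rmin_r]. }
    exists eps'. split; [exact he'0|].
    intros p hp x y hn hE heq. pose proof hn as hn'.
    destruct (KEY p x y hn hE heq) as [hx [hu [e1 [e2 hw]]]].
    revert hw. set (w := beta0*(a+y) - q). intro hw.
    destruct hn' as [_ hny]. apply Rabs_def2 in hny as [hny1 hny2].
    assert (hwq : w + q < 2*q).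
    { unfold w. assert (y < Is + q/beta0) by lra.
      assert (h1 : beta0*y < beta0*(Is + q/beta0)) by (apply Rmult_lt_compat_l; lra).
      rewrite Rmult_plus_distr_l, hqb in h1.
      assert (h2 : beta0*(a+Is) = q) by (rewrite haIs; exact hqb).
      replace (beta0*(a+y)) with (beta0*a + beta0*y) by ring.
      replace (beta0*(a+Is)) with (beta0*a + beta0*Is) in h2 by ring. lra. }
    assert (hwq0 : 0 < w + q) by (unfold w; nra).
    assert (hww : w*w < (beta0*eta/2)*(beta0*eta/2)).
    { rewrite hw. assert ((p - Astar)*(w+q) < (p - Astar)*(2*q)) by nra. nra. }
    apply sq_lt in hww; [|nra].
    assert (hyI : y - Is = w/beta0) by (rewrite <- (hwI y); reflexivity).
    assert (hwb : -(eta/2) < w/beta0 < eta/2).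
    { split; [apply (Rmult_lt_reg_l beta0)|apply (Rmult_lt_reg_l beta0)]; try lra;
      replace (beta0*(w/beta0)) with w by (field; lra); lra. }
    assert (hxS : x - Ss = (p - Astar) - w).
    { rewrite e1. unfold Ss. replace (beta0*y) with (beta0*(y - Is) + beta0*Is) by ring.
      rewrite hyI. replace (beta0*(w/beta0)) with w by (field; lra). ring. }
    split; apply Rabs_def1; nra. }
Qed.
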